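(* Let $X$ be an infinite set, $k>0$ an integer, and $\{(x^0_n,\dots,x^{k-1}_n):n\in\omega\}$ a sequence in $([X]^{<\omega})^k$. Then there exist: elements $d_0,\dots,d_{k-1}\in[X]^{<\omega}$; a strictly increasing sequence $(n_l)_{l\in\omega}$ in $\omega$; an integer $t$ with $0\le t\le k$ and a sequence $\{(y^0_{n_l},\dots,y^{t-1}_{n_l}):l\in\omega\}$ in $([X]^{<\omega})^t$; and for each $0\le s<k$ a function $P_s:t\to 2$, such that (i) $x^s_{n_l}=\Big(\sum_{i=0}^{t-1}P_s(i)\,y^i_{n_l}\Big)\triangle d_s$ for every $l\in\omega$ and $0\le s<k$ (where for $t=0$ this reads $x^s_{n_l}=d_s$); (ii) the family $\{y^i_{n_l}: l\in\omega,\ 0\le i<t\}$ is linearly independent.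
   Context: $[X]^{<\omega}$ is the set of finite subsets of $X$, regarded as a vector space over the field $2=\{0,1\}$ with symmetric difference $\triangle$ as addition; sums $\sum P(i)y^i$ are taken in this vector space. Linear independence is over $2$, for the indexed family (so members are pairwise distinct). *)

(* Defs.v *)
From mathcomp Require Import all_boot all_order.
From mathcomp Require Import finmap.
Set Implicit Arguments. Unset Strict Implicit. Unset Printing Implicit Defensive.

Local Open Scope fset_scope.

(* symmetric difference: the addition of the GF(2)-vector space [X]^{<omega} *)
Definition symdiff (X : choiceType) (A B : {fset X}) : {fset X} :=
  fsetU (fsetD A B) (fsetD B A).

Definition lincomb (X : choiceType) (t : nat) (P : 'I_t -> bool)
  (y : 'I_t -> {fset X}) : {fset X} :=
  \big[@symdiff X/fset0]_(i < t) (if P i then y i else fset0).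

(* linear independence over 2 of an indexed family y : I -> [X]^{<omega}:
   no nonempty finite set of indices has (symmetric-difference) sum 0.
   (This also forces the members to be pairwise distinct.) *)
Definition lin_indep (X : choiceType) (I : eqType) (y : I -> {fset X}) : Prop :=
  forall F : seq I, uniq F ->
    \big[@symdiff X/fset0]_(j <- F) y j = fset0 -> F = [::].

Definition infinite_type (X : choiceType) : Prop :=
  forall s : seq X, exists x : X, x \notin s.

(* Main.v *)
Require Import Defs.
From HB Require Import structures.
From mathcomp Require Import all_boot all_order.
From mathcomp Require Import finmap.
From Stdlib Require Import Classical ClassicalEpsilon.
Set Implicit Arguments. Unset Strict Implicit. Unset Printing Implicit Defensive.
Local Open Scope fset_scope.

Section SD.
Variable X : choiceType.
Local Notation V := {fset X}.
Local Notation sd := (@symdiff X).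

Lemma sdA : associative sd.
Proof. move=> a b c; apply/fsetP=> z; rewrite /symdiff !inE.
by case: (z \in a); case: (z \in b); case: (z \in c). Qed.
Lemma sdC : commutative sd.
Proof. move=> a b; apply/fsetP=> z; rewrite /symdiff !inE.
by case: (z \in a); case: (z \in b). Qed.
Lemma sd0x : left_id fset0 sd.
Proof. move=> a; apply/fsetP=> z; rewrite /symdiff !inE; by case: (z \in a). Qed.
Lemma sdx0 : right_id fset0 sd.
Proof. move=> a; by rewrite sdC sd0x. Qed.
Lemma sdxx a : sd a a = fset0.
Proof. apply/fsetP=> z; rewrite /symdiff !inE; by case: (z \in a). Qed.

Lemma sdCA a b c : sd a (sd b c) = sd b (sd a c).
Proof. by rewrite !sdA (sdC a). Qed.

HB.instance Definition _ := Monoid.isComLaw.Build V fset0 sd sdA sdC sd0x.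

Lemma sd_eq0 a b : sd a b = fset0 -> a = b.
Proof. move=> h; by rewrite -[b]sd0x -h -sdA sdxx sdx0. Qed.

Lemma sd_solve a b v : sd a b = v -> a = sd b v.
Proof. move=> <-; by rewrite [sd a b]sdC sdA sdxx sd0x. Qed.

Fixpoint spanL (L : seq V) : seq V :=
  if L is v :: L' then spanL L' ++ map (sd v) (spanL L') else [:: fset0].

Lemma span0 L : fset0 \in spanL L.
Proof. elim: L => [|v L IH] /=; by rewrite ?mem_seq1 // mem_cat IH. Qed.

Lemma span_sd L a b : a \in spanL L -> b \in spanL L -> sd a b \in spanL L.
Proof.
elim: L a b => [|v L IH] a b /=.
  by rewrite !mem_seq1 => /eqP-> /eqP->; rewrite sdxx.
rewrite !mem_cat => /orP[Ha|/mapP[a' Ha ->]] /orP[Hb|/mapP[b' Hb ->]].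
- by rewrite IH.
- apply/orP; right; rewrite sdCA; exact: map_f (IH _ _ Ha Hb).
- apply/orP; right; rewrite -sdA; exact: map_f (IH _ _ Ha Hb).
- apply/orP; left; rewrite [sd v a']sdC -sdA (sdA v v) sdxx sd0x; exact: IH.
Qed.

Lemma span_mem L v : v \in L -> v \in spanL L.
Proof.
elim: L => [|w L IH] //=; rewrite in_cons mem_cat => /orP[/eqP->|H].
  by apply/orP; right; rewrite -{1}[w]sdx0; apply: map_f; exact: span0.
by rewrite IH.
Qed.

Definition avoid (f : nat -> V) :=
  forall S : seq V, exists b, forall m, b <= m -> f m \notin S.

Lemma not_freq_avoid (f : nat -> V) :
  (forall v, ~ (forall m, exists l, m <= l /\ f l = v)) -> avoid f.
Proof.
move=> H; elim=> [|v S [b Hb]]; first by exists 0.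
have [m0 Hm0] : exists m0, forall l, m0 <= l -> f l <> v.
  apply: NNPP => Hn; apply: (H v) => m; apply: NNPP => Hm; apply: Hn.
  exists m => l Hl Hfl; apply: Hm; by exists l.
exists (maxn b m0) => m; rewrite geq_max => /andP[h1 h2].
rewrite in_cons negb_or Hb // andbT; apply/eqP; exact: Hm0.
Qed.

End SD.

Lemma incr_ge (psi : nat -> nat) : (forall l, psi l < psi l.+1) -> forall l, l <= psi l.
Proof. move=> H; elim=> [|l IH] //; by apply: leq_trans (H l); rewrite ltnS. Qed.

Lemma incr_mono (psi : nat -> nat) : (forall l, psi l < psi l.+1) ->
  forall i j, i < j -> psi i < psi j.
Proof. move=> H i; elim=> // j IH; rewrite ltnS leq_eqVlt => /orP[/eqP->|/IH h].
  exact: H.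
exact: ltn_trans h (H j).
Qed.

Lemma avoid_sub (X : choiceType) (f : nat -> {fset X}) psi :
  (forall l, psi l < psi l.+1) -> avoid f -> avoid (fun l => f (psi l)).
Proof.
move=> Hp Ha S; have [b Hb] := Ha S; exists b => m Hm; apply: Hb.
exact: leq_trans Hm (incr_ge Hp m).
Qed.

Lemma greedy (R : seq nat -> nat -> Prop) :
  (forall s m, exists n, m <= n /\ R s n) ->
  exists psi : nat -> nat, (forall l, psi l < psi l.+1) /\
    forall l, R [seq psi j | j <- iota 0 l] (psi l).
Proof.
move=> H.
pose ch s m := proj1_sig (constructive_indefinite_description _ (H s m)).
have Hch s m : m <= ch s m /\ R s (ch s m).
  exact: proj2_sig (constructive_indefinite_description _ (H s m)).
pose g := fix g (l : nat) : seq nat :=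
  if l is l'.+1 then rcons (g l') (ch (g l') (last 0 (g l')).+1) else [::].
pose psi l := ch (g l) (last 0 (g l)).+1.
have gS l : g l.+1 = rcons (g l) (psi l) by [].
have gE l : g l = [seq psi j | j <- iota 0 l].
  elim: l => [|l IH] //; by rewrite gS IH -addn1 iotaD map_cat cats1.
exists psi; split.
  move=> l; rewrite /psi gS last_rcons; exact: (Hch _ _).1.
move=> l; rewrite -gE; exact: (Hch _ _).2.
Qed.

Lemma fin_bound (T : finType) (P : T -> nat -> Prop) :
  (forall q b b', b <= b' -> P q b -> P q b') -> (forall q, exists b, P q b) ->
  exists b, forall q, P q b.
Proof.
move=> Hm H.
suff [b Hb] : exists b, forall q, q \in enum T -> P q b.
  by exists b => q; apply: Hb; rewrite mem_enum.
elim: (enum T) => [|q r [b Hb]]; first by exists 0.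
have [b' Hb'] := H q; exists (maxn b b') => q'; rewrite in_cons => /orP[/eqP->|Hq'].
  by apply: Hm Hb'; rewrite leq_maxr.
by apply: Hm (Hb _ Hq'); rewrite leq_maxl.
Qed.
Definition fQ (X : choiceType) k (x : nat -> 'I_k -> {fset X}) (Q : {set 'I_k}) m :=
  \big[@symdiff X/fset0]_(j in Q) x m j.

Lemma stage (X : choiceType) k (x : nat -> 'I_k -> {fset X}) s : s <= k ->
  exists (phi : nat -> nat) (B : {set 'I_k}) (P : 'I_k -> {set 'I_k}) (d : 'I_k -> {fset X}),
  [/\ (forall l, phi l < phi l.+1), (forall j : 'I_k, j \in B -> j < s),
      (forall j : 'I_k, j < s -> P j \subset B /\
          forall l, x (phi l) j = symdiff (fQ x (P j) (phi l)) (d j)) &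
      (forall Q : {set 'I_k}, Q \subset B -> Q != set0 -> avoid (fun l => fQ x Q (phi l)))].
Proof.
elim: s => [_|s IH Hs].
  exists id, set0, (fun _ => set0), (fun _ => fset0); split => //.
  - by move=> j; rewrite inE.
  - by move=> Q; rewrite subset0 => ->.
have [phi [B [P [d [Hphi HB HP HA]]]]] := IH (ltnW Hs).
pose j0 := Ordinal Hs.
case: (classic (exists (Q : {set 'I_k}) (v : {fset X}), Q \subset B /\
   forall m, exists l, m <= l /\ symdiff (x (phi l) j0) (fQ x Q (phi l)) = v)).
- move=> [Q [v [HQ Hf]]].
  have [psi [Hpsi Hpv]] := greedy (R := fun _ n => symdiff (x (phi n) j0) (fQ x Q (phi n)) = v)
      (fun _ m => Hf m).
  exists (fun l => phi (psi l)), B, (fun j => if j == j0 then Q else P j),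
     (fun j => if j == j0 then v else d j); split.
  + by move=> l; apply: incr_mono.
  + by move=> j /HB /ltnW.
  + move=> j; case: (eqVneq j j0) => [->|nj] Hj.
      split => // l; exact: sd_solve (Hpv l).
    have Hjs : j < s.
      by move: Hj; rewrite ltnS leq_eqVlt => /orP[/eqP Hv|//]; case/eqP: nj; apply: val_inj.
    have [H1 H2] := HP j Hjs; split => // l; exact: H2.
  + move=> Q' HQ' HQ0; exact: avoid_sub (HA Q' HQ' HQ0).
- move=> Hn.
  exists phi, (j0 |: B), (fun j => if j == j0 then [set j0] else P j),
     (fun j => if j == j0 then fset0 else d j); split => //.
  + move=> j; rewrite in_setU1 => /orP[/eqP->//|/HB /ltnW //].
  + move=> j; case: (eqVneq j j0) => [->|nj] Hj.
      split; first by rewrite sub1set setU11.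
      by move=> l; rewrite sdx0 /fQ big_set1.
    have Hjs : j < s.
      by move: Hj; rewrite ltnS leq_eqVlt => /orP[/eqP Hv|//]; case/eqP: nj; apply: val_inj.
    have [H1 H2] := HP j Hjs; split => //.
    exact: subset_trans H1 (subsetU1 _ _).
  + move=> Q HQ HQ0.
    have HQB : Q :\ j0 \subset B.
      apply/subsetP => z; rewrite in_setD1 => /andP[nz zQ].
      by move: (subsetP HQ z zQ); rewrite in_setU1 (negbTE nz).
    case: (boolP (j0 \in Q)) => Hj0; last first.
      apply: HA => //; apply: subset_trans HQB; apply/subsetP => z zQ.
      by rewrite in_setD1 zQ andbT; apply: contraNneq Hj0 => <-.
    have E m : fQ x Q m = symdiff (x m j0) (fQ x (Q :\ j0) m).
      rewrite /fQ (bigD1 j0) //=; congr symdiff; apply: eq_bigl => z.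
      by rewrite in_setD1 andbC.
    apply: not_freq_avoid => v Hf; apply: Hn; exists (Q :\ j0), v; split => //.
    move=> m; have [l [Hl Hfl]] := Hf m; exists l; split => //; by rewrite -E.
Qed.
Lemma max_in (s : seq nat) : s != [::] -> exists2 L, L \in s & forall y, y \in s -> y <= L.
Proof.
elim: s => // a s IH _; case: (eqVneq s [::]) => [->|/IH [L HL HLm]].
  by exists a; rewrite ?mem_head // => y; rewrite mem_seq1 => /eqP->.
case: (leqP a L) => h.
  exists L; first by rewrite in_cons HL orbT.
  by move=> y; rewrite in_cons => /orP[/eqP->//|/HLm].
exists a; first exact: mem_head.
move=> y; rewrite in_cons => /orP[/eqP->//|/HLm hy]; exact: ltnW (leq_ltn_trans hy h).
Qed.

Unset Implicit Arguments.
Local Close Scope fset_scope.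

Theorem mainTheorem3 (X : choiceType) (k : nat)
  (x : nat -> 'I_k -> {fset X}) :
  infinite_type X -> 0 < k ->
  exists (d : 'I_k -> {fset X}) (n : nat -> nat) (t : nat)
         (y : nat -> 'I_t -> {fset X}) (P : 'I_k -> 'I_t -> bool),
    (forall l, n l < n l.+1) /\ t <= k /\
    (forall l (s : 'I_k), x (n l) s = symdiff (lincomb (P s) (y l)) (d s)) /\
    lin_indep (fun p : nat * 'I_t => y p.1 p.2).
Proof.
move=> _ _.
have [phi [B [P0 [d [Hphi _ HP HA]]]]] := stage x (leqnn k).
pose t := #|B|.
pose ev (i : 'I_t) : 'I_k := enum_val i.
pose Lst (s : seq nat) := flatten [seq [seq x (phi m') (ev i) | i <- enum 'I_t] | m' <- s].
pose R s m := forall Q : {set 'I_t}, Q != set0 -> fQ x (ev @: Q) (phi m) \notin spanL (Lst s).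
have HR : forall s m, exists n, m <= n /\ R s n.
  move=> s m.
  have [b Hb] : exists b, forall Q : {set 'I_t}, Q != set0 -> forall n, b <= n ->
                      fQ x (ev @: Q) (phi n) \notin spanL (Lst s).
    apply: (@fin_bound _ (fun Q b => Q != set0 -> forall n, b <= n ->
                      fQ x (ev @: Q) (phi n) \notin spanL (Lst s))).
    move=> Q b b' Hbb' H HQ n Hn; apply: (H HQ n); exact: leq_trans Hbb' Hn.
    move=> Q; case: (eqVneq Q set0) => [->|HQ]; first by exists 0.
    have HQB : ev @: Q \subset B.
      by apply/subsetP => z /imsetP[i _ ->]; exact: enum_valP.
    have HQ0 : ev @: Q != set0 by rewrite imset_eq0.
    have [b Hb] := HA _ HQB HQ0 (spanL (Lst s)).
    by exists b => _.
  exists (maxn m b); split; first exact: leq_maxl.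
  move=> Q HQ; apply: Hb HQ _ _; exact: leq_maxr.
have [psi [Hpsi HRpsi]] := greedy HR.
exists d, (fun l => phi (psi l)), t, (fun l i => x (phi (psi l)) (ev i)),
  (fun j i => ev i \in P0 j).
split; first by move=> l; apply: incr_mono.
split; first by rewrite /t -[k in _ <= k]card_ord; apply: max_card.
split.
  move=> l s; have [H1 H2] := HP s (ltn_ord s).
  rewrite H2; congr symdiff.
  rewrite /lincomb /fQ -big_mkcond /=.
  rewrite (eq_bigl (fun j => (j \in B) && (j \in P0 s))); last first.
    move=> j; apply/idP/andP => [h|[]//]; split=> //; exact: subsetP H1 _ h.
  by rewrite big_enum_val_cond.
move=> F uF Hsum; apply/eqP; apply: contraT => HF.
have HF' : [seq p.1 | p <- F] != [::] by case: F HF uF Hsum.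
have [L HL HLm] := max_in HF'.
have [p0 Hp0 Ep0] := mapP HL.
rewrite (bigID (fun p : nat * 'I_t => p.1 == L)) /= in Hsum.
have E := sd_eq0 Hsum.
pose r1 := [seq p.2 | p <- F & p.1 == L].
pose Q := [set i in r1].
have HQ : Q != set0.
  apply/set0Pn; exists p0.2; rewrite inE; apply: map_f.
  by rewrite mem_filter -Ep0 eqxx.
have S1E : \big[@symdiff X/fset0]_(p <- F | p.1 == L) x (phi (psi p.1)) (ev p.2)
           = fQ x (ev @: Q) (phi (psi L)).
  rewrite -big_filter.
  rewrite (eq_big_seq (fun p : nat * 'I_t => x (phi (psi L)) (ev p.2))); last first.
    by move=> p; rewrite mem_filter => /andP[/eqP-> _].
  rewrite -(big_map snd xpredT (fun i => x (phi (psi L)) (ev i))).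
  rewrite big_uniq; last first.
    rewrite map_inj_in_uniq ?filter_uniq //.
    move=> [a b] [a' b']; rewrite !mem_filter /= => /andP[/eqP-> _] /andP[/eqP-> _] ->.
    by [].
  rewrite /fQ big_imset; last by move=> i j _ _; apply: enum_val_inj.
  by apply: eq_bigl => i; rewrite inE.
have S2 : \big[@symdiff X/fset0]_(p <- F | p.1 != L) x (phi (psi p.1)) (ev p.2)
           \in spanL (Lst [seq psi j | j <- iota 0 L]).
  rewrite big_seq_cond; apply: (big_ind (fun v => v \in spanL (Lst [seq psi j | j <- iota 0 L]))).
  - exact: span0.
  - exact: span_sd.
  move=> p /andP[pF pL]; apply: span_mem; apply/flatten_mapP.
  exists (psi p.1).
    apply: map_f; rewrite mem_iota add0n /= ltn_neqAle pL.
    by apply: HLm; apply: map_f.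
  by apply: map_f; rewrite mem_enum.
have := HRpsi L Q HQ.
by rewrite -S1E E S2.
Qed.
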